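(* Let $k$ be a field, $A=kQ_A/I_A$ a monomial algebra with vertices $e_1,\dots,e_n$, and $B$ the algebra obtained by gluing the distinct non-isolated vertices $e_1,e_n$. Then there is a decomposition of $k$-vector spaces $\mathrm{Ker}(\delta^0_{(B)_{\ge1}})=\psi_0(\mathrm{Ker}(\delta^0_{(A)_{\ge1}}))\oplus Z_{nsp}$. In particular, if $e_1,e_n$ lie in the same block, then $\dim_k\mathrm{Ker}(\delta^0_{(B)_{\ge1}})=\dim_k\mathrm{Ker}(\delta^0_{(A)_{\ge1}})+\mathrm{nsp}(1,n)$; if they lie in different blocks, then $\dim_k\mathrm{Ker}(\delta^0_{(B)_{\ge1}})=\dim_k\mathrm{Ker}(\delta^0_{(A)_{\ge1}})$.
   Context: Monomial algebra: $A=kQ_A/I_A$, $Q_A$ finite quiver, $I_A$ admissible, generated by a minimal set $Z_A$ of paths of length $\ge2$; $\mathcal B_A$: paths (including trivial ones) avoiding elements of $Z_A$ as subpaths; $(\mathcal B_A)_{\ge1}$ those of length $\ge1$. Gluing: $B\subseteq A$ generated by $f_1=e_1+e_n$, $f_i=e_i$ ($2\le i\le n-1$) and all arrows; $B\cong kQ_B/I_B$, $Q_B$ obtained by identifying $e_1,e_n$ to $f_1$ (arrow $\alpha\mapsto\alpha^*$, path $p=a_m\cdots a_1\mapsto p^*=a_m^*\cdots a_1^*$, $e_i^*=f_i$, $e_1^*=e_n^*=f_1$), $I_B$ generated by $\{r^*:r\in Z_A\}$ and the paths $b^*c^*$ with $b,c$ arrows, $t(c),s(b)\in\{e_1,e_n\}$,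 $t(c)\ne s(b)$; $\mathcal B_B$ its basis paths. Blocks correspond to connected components of $Q_A$. For path sets $X,Y$, $k(X\|Y)$ has basis the pairs $x\|y$ of parallel paths. For monomial $\Lambda=kQ/\langle Z\rangle$ with basis paths $\mathcal B$, $\delta^0:k(Q_0\|\mathcal B)\to k(Q_1\|\mathcal B)$, $e\|\gamma\mapsto\sum_{a\in Q_1,s(a)=e,a\gamma\in\mathcal B}a\|a\gamma-\sum_{a\in Q_1,t(a)=e,\gamma a\in\mathcal B}a\|\gamma a$; $\delta^0_{(A)_{\ge1}}$ is the restriction of $\delta^0_A$ to $k((Q_A)_0\|(\mathcal B_A)_{\ge1})$, similarly for $B$. $\psi_0:k((Q_A)_0\|\mathcal B_A)\to k((Q_B)_0\|\mathcal B_B)$, $e\|p\mapsto e^*\|p^*$. A non-special path is a path $p\in\mathcal B_A$ from $e_1$ to $e_n$ or from $e_n$ to $e_1$ such that $ap\in I_A$ and $pb\in I_A$ for all arrows $a,b$ (equivalently $\delta^0_B(f_1\|p^* )=0$); $\mathrm{nsp}(1,n)$ is their number, and $Z_{nsp}$ is the span of the elements $f_1\|p^*$ over non-special paths $p$. *)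

(* Defs.v *)
From HB Require Import structures.
From mathcomp Require Import all_boot all_order all_algebra.
Set Implicit Arguments. Unset Strict Implicit. Unset Printing Implicit Defensive.
Import GRing.Theory.

(* Generic machinery for a monomial algebra  Lambda = kQ/<Z>.               *)
(* A path is a pair (v, w) : V * seq E, where w = [:: a_1; ...; a_m] lists  *)
(* the arrows in the order they are traversed (so the paper's path          *)
(* a_m ... a_1 is (s a_1, [:: a_1; ...; a_m])); the trivial path e_v is     *)
(* (v, [::]).  A relation r in Z is a (nontrivial) path, stored as its      *)
(* arrow sequence.                                                          *)

Section Paths.
Variables (V E : finType) (s t : E -> V).

Definition qpath := (V * seq E)%type.

Definition is_path (p : qpath) : bool :=
  match p.2 with
  | [::] => true
  | a :: w => (s a == p.1) && path (fun x y => t x == s y) a w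
  end.

Definition psrc (p : qpath) : V := p.1.
Definition ptgt (p : qpath) : V := last p.1 [seq t a | a <- p.2].
Definition plen (p : qpath) : nat := size p.2.

Definition is_relation (r : seq E) : bool :=
  if r is a :: w then (1 <= size w)%N && path (fun x y => t x == s y) a w
  else false.

(* the path a p (first p, then the arrow a) and p a (first a, then p) *)
Definition arrow_after (p : qpath) (a : E) : qpath := (p.1, rcons p.2 a).
Definition arrow_before (a : E) (p : qpath) : qpath := (s a, a :: p.2).

Fixpoint words (L : nat) : seq (seq E) :=
  if L is L'.+1 then [seq a :: w | a <- enum E, w <- words L'] else [:: [::]].

Definition all_paths (N : nat) : seq qpath :=
  filter is_path
    [seq (v, w) | v <- enum V, w <- flatten [seq words L | L <- iota 0 N]].

Variable Z : seq (seq E).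

Definition in_basis (p : qpath) : bool :=
  is_path p && all (fun r => ~~ infix r p.2) Z.

(* enumeration of B (resp. B_{>=1}); it is complete as soon as every path
   of length N lies in the ideal (hypothesis of the theorem). *)
Definition basis (N : nat) : seq qpath := filter in_basis (all_paths N).
Definition basis_pos (N : nat) : seq qpath :=
  [seq p <- basis N | (0 < plen p)%N].

(* the bases of k(Q_0 || B_{>=1}) and of k(Q_1 || B): parallel pairs *)
Definition dom0 (N : nat) : seq (V * qpath) :=
  [seq x <- [seq (e, p) | e <- enum V, p <- basis_pos N]
     | (psrc x.2 == x.1) && (ptgt x.2 == x.1)].
Definition cod0 (N : nat) : seq (E * qpath) :=
  [seq x <- [seq (a, p) | a <- enum E, p <- basis N]
     | (psrc x.2 == s x.1) && (ptgt x.2 == t x.1)].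

Variable k : fieldType.
Local Open Scope ring_scope.

(* coefficient of the basis element a||d in delta^0(e||g) *)
Definition delta0_coef (x : V * qpath) (y : E * qpath) : k :=
  let: (e, g) := x in let: (a, d) := y in
  (nat_of_bool [&& s a == e, d == arrow_after g a & in_basis (arrow_after g a)])%:R
  - (nat_of_bool [&& t a == e, d == arrow_before a g & in_basis (arrow_before a g)])%:R.

(* matrix of delta^0_{(Lambda)_{>=1}} : k(Q_0||B_{>=1}) -> k(Q_1||B),
   acting on row vectors of coordinates *)
Definition delta0 (N : nat) : 'M[k]_(size (dom0 N), size (cod0 N)) :=
  \matrix_(i, j) delta0_coef (tnth (in_tuple (dom0 N)) i)
                             (tnth (in_tuple (cod0 N)) j).

(* e_1, e_n in the same block = same connected component of the quiver *)
Definition same_block (u v : V) : bool :=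
  connect (fun x y => [exists a, ((s a == x) && (t a == y))
                                 || ((s a == y) && (t a == x))]) u v.

End Paths.

(* Gluing the vertices v1 (= e_1) and vn (= e_n).                           *)
Section Gluing.
Variables (V E : finType) (s t : E -> V) (v1 vn : V) (hneq : v1 != vn).

(* vertices of Q_B: those of Q_A other than vn; v1 plays the role of f_1 *)
Definition VB : finType := {x : V | x != vn}.
Definition glue (x : V) : VB := insubd (exist (fun y => y != vn) v1 hneq) x.
Definition sB (a : E) : VB := glue (s a).
Definition tB (a : E) : VB := glue (t a).

(* generators of I_B : the r^* and the b^* c^* *)
Definition ZB (Z : seq (seq E)) : seq (seq E) :=
  Z ++ [seq [:: cb.1; cb.2] | cb <- [seq (c, b) | c <- enum E, b <- enum E]
         & [&& t cb.1 \in [:: v1; vn], s cb.2 \in [:: v1; vn] & t cb.1 != s cb.2]].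

Definition psi_pair (x : V * qpath V E) : VB * qpath VB E :=
  (glue x.1, (glue x.2.1, x.2.2)).

Variable Z : seq (seq E).

Definition nonspecial (p : qpath V E) : bool :=
  [&& in_basis s t Z p,
      ((psrc p == v1) && (ptgt t p == vn)) || ((psrc p == vn) && (ptgt t p == v1)),
      [forall a : E, (s a == ptgt t p) ==> ~~ in_basis s t Z (arrow_after p a)]
    & [forall b : E, (t b == psrc p) ==> ~~ in_basis s t Z (arrow_before s b p)]].

Definition nsp_list (N : nat) : seq (qpath V E) := filter nonspecial (basis s t Z N).
Definition nsp (N : nat) : nat := size (nsp_list N).

Variable k : fieldType.
Local Open Scope ring_scope.

Definition psi0 (N : nat) :
  'M[k]_(size (dom0 s t Z N), size (dom0 sB tB (ZB Z) N)) :=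
  \matrix_(i, j) (nat_of_bool (tnth (in_tuple (dom0 sB tB (ZB Z) N)) j
                               == psi_pair (tnth (in_tuple (dom0 s t Z N)) i)))%:R.

(* rows: the elements f_1 || p^* for p non-special; they span Z_nsp *)
Definition Znsp (N : nat) :
  'M[k]_(size (nsp_list N), size (dom0 sB tB (ZB Z) N)) :=
  \matrix_(i, j) (nat_of_bool (tnth (in_tuple (dom0 sB tB (ZB Z) N)) j
                   == (glue v1, (glue (tnth (in_tuple (nsp_list N)) i).1,
                                 (tnth (in_tuple (nsp_list N)) i).2))))%:R.

End Gluing.

(* Main.v *)
Require Import Defs.
From HB Require Import structures.
From mathcomp Require Import all_boot all_order all_algebra.
Import GRing.Theory.
Set Implicit Arguments. Unset Strict Implicit. Unset Printing Implicit Defensive.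

Section Gen.
Variables (V E : finType) (s t : E -> V).

Lemma mem_words L w : (w \in words E L) = (size w == L).
Proof.
elim: L w => [|L IH] [|a w] //=.
- by apply/allpairsP => [[p [_ _]]].
apply/allpairsP/idP => [[[b u] /= [_ Hu E1]]|Hw]. case: E1 => E1 E2. subst. by rewrite eqSS -IH.
by exists (a, w); rewrite mem_enum IH; split.
Qed.

Lemma uniq_words L : uniq (words E L).
Proof.
elim: L => [|L IH] //=.
apply: allpairs_uniq => //; first exact: enum_uniq.
by move=> [a w] [b u] _ _ /= [-> ->].
Qed.

Lemma mem_flat_words N w :
  (w \in flatten [seq words E L | L <- iota 0 N]) = (size w < N).
Proof.
apply/flattenP/idP => [[u /mapP [L]]|Hw].
  by rewrite mem_iota /= add0n => HL -> ; rewrite mem_words => /eqP ->.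
by exists (words E (size w)); [apply/mapP; exists (size w); rewrite // mem_iota | rewrite mem_words].
Qed.

Lemma uniq_flat_words N : uniq (flatten [seq words E L | L <- iota 0 N]).
Proof.
elim: N => [|N IH] //.
rewrite -addn1 iotaD map_cat flatten_cat /= cats0 cat_uniq IH uniq_words /=.
rewrite andbT; apply/hasPn => w; rewrite mem_words mem_flat_words => /eqP ->.
by rewrite add0n ltnn.
Qed.

Lemma mem_all_paths N p :
  (p \in all_paths s t N) = is_path s t p && (size p.2 < N).
Proof.
rewrite mem_filter; case: (is_path s t p) => //=.
case: p => v w /=.
apply/allpairsP/idP => [[[u x] /= [_ Hx E1]]|Hw]; first by case: E1 => _ ->; rewrite -mem_flat_words.
by exists (v, w); rewrite mem_enum mem_flat_words.
Qed.

Lemma uniq_all_paths N : uniq (all_paths s t N).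
Proof.
apply: filter_uniq; apply: allpairs_uniq; [exact: enum_uniq|exact: uniq_flat_words|].
by move=> [a w] [b u] _ _ /= [-> ->].
Qed.

End Gen.

Lemma noinf_sub (E : eqType) (Z : seq (seq E)) w w' :
  infix w' w -> all (fun r => ~~ infix r w) Z -> all (fun r => ~~ infix r w') Z.
Proof.
move=> Hi /allP H; apply/allP => r Hr; apply/negP => Hr'.
by move: (H r Hr); rewrite (infix_trans Hr' Hi).
Qed.

Section Gen2.
Variables (V E : finType) (s t : E -> V) (Z : seq (seq E)).

Lemma in_basis_cons v a w :
  in_basis s t Z (v, a :: w) =
  [&& s a == v, path (fun x y => t x == s y) a w & all (fun r => ~~ infix r (a :: w)) Z].
Proof. by rewrite /in_basis /is_path /= andbA. Qed.

Lemma in_basis_src v a w : in_basis s t Z (v, a :: w) -> s a = v.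
Proof. by rewrite in_basis_cons => /andP [/eqP]. Qed.

Lemma in_basis_rcons v w a b :
  in_basis s t Z (v, rcons (b :: w) a) ->
  in_basis s t Z (v, b :: w) /\ t (last b w) = s a.
Proof.
rewrite (in_basis_cons v b (rcons w a)) in_basis_cons rcons_path => /and3P [-> /andP [-> /eqP ->] H].
by split=> //; apply: noinf_sub H; rewrite -rcons_cons infix_rcons.
Qed.

Lemma in_basis_behead v a b w :
  in_basis s t Z (v, a :: b :: w) ->
  in_basis s t Z (s b, b :: w) /\ t a = s b.
Proof.
rewrite !in_basis_cons => /and3P [_ /andP [/eqP Hab Hp] H]; split=> //.
apply/and3P; split => //; exact: (noinf_sub (infix_cons _ a) H).
Qed.

Lemma ptgt_cons v a w : ptgt t (v, a :: w) = t (last a w).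
Proof. by rewrite /ptgt /= last_map. Qed.

Lemma ptgt_rcons v w a : ptgt t (v, rcons w a) = t a.
Proof. by rewrite /ptgt /= map_rcons last_rcons. Qed.

Variable N : nat.
Hypothesis adm : forall p : qpath V E, is_path s t p -> plen p = N -> ~~ in_basis s t Z p.

Lemma in_basis_len p : in_basis s t Z p -> size p.2 < N.
Proof.
case: p => v w /= Hb; rewrite ltnNge; apply/negP => HN.
have Hp : in_basis s t Z (v, take N w).
  move: Hb; rewrite /in_basis /is_path /= => /andP [Hp Hz].
  apply/andP; split; last by apply: noinf_sub Hz; apply: infix_take.
  case: w HN Hp {Hz} => [|a w] /=; first by case: N.
  case: N => [|n] //= _ /andP [-> /(take_path n) ->].
  by [].
have Hpp : is_path s t (v, take N w) by move: Hp => /andP [].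
have Hl : plen (v, take N w) = N by rewrite /plen /= size_take_min; apply/minn_idPl.
by move: (adm Hpp Hl); rewrite Hp.
Qed.

Lemma mem_basis p : (p \in basis s t Z N) = in_basis s t Z p && (size p.2 < N).
Proof.
rewrite mem_filter mem_all_paths; case Hb: (in_basis s t Z p) => //=.
by move: Hb => /andP [-> _].
Qed.

Lemma mem_basis' p : (p \in basis s t Z N) = in_basis s t Z p.
Proof. by rewrite mem_basis; case Hb: (in_basis _ _ _ _) => //=; rewrite in_basis_len. Qed.

Lemma uniq_basis : uniq (basis s t Z N).
Proof. exact/filter_uniq/uniq_all_paths. Qed.

Lemma mem_dom0 x : (x \in dom0 s t Z N) =
  [&& in_basis s t Z x.2, 0 < size x.2.2, psrc x.2 == x.1 & ptgt t x.2 == x.1].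
Proof.
rewrite mem_filter; case: x => e p /=.
have -> : ((e, p) \in [seq (e0, p0) | e0 <- enum V, p0 <- basis_pos s t Z N]) = in_basis s t Z p && (0 < size p.2).
  apply/allpairsP/idP => [[[e' p'] /= [_ Hp E1]]|Hp].
    by case: E1 => _ ->; move: Hp; rewrite mem_filter mem_basis' andbC.
  by exists (e,p); rewrite mem_enum mem_filter mem_basis' andbC.
by case: (in_basis _ _ _ _); case: (0 < _); case: (psrc _ == _); case: (ptgt _ _ == _).
Qed.

Lemma uniq_dom0 : uniq (dom0 s t Z N).
Proof.
apply: filter_uniq; apply: allpairs_uniq; [exact: enum_uniq| |].
  exact/filter_uniq/uniq_basis.
by move=> [a w] [b u] _ _ /= [-> ->].
Qed.

Lemma mem_cod0 y : (y \in cod0 s t Z N) =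
  [&& in_basis s t Z y.2, psrc y.2 == s y.1 & ptgt t y.2 == t y.1].
Proof.
rewrite mem_filter; case: y => a p /=.
have -> : ((a, p) \in [seq (a0, p0) | a0 <- enum E, p0 <- basis s t Z N]) = in_basis s t Z p.
  apply/allpairsP/idP => [[[e' p'] /= [_ Hp E1]]|Hp].
    by case: E1 => _ ->; move: Hp; rewrite mem_basis'.
  by exists (a,p); rewrite mem_enum mem_basis'.
by case: (in_basis _ _ _ _); case: (psrc _ == _); case: (ptgt _ _ == _).
Qed.

Lemma uniq_cod0 : uniq (cod0 s t Z N).
Proof.
apply: filter_uniq; apply: allpairs_uniq; [exact: enum_uniq|exact: uniq_basis|].
by move=> [a w] [b u] _ _ /= [-> ->].
Qed.


Lemma dom0E x : x \in dom0 s t Z N ->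
  exists a w, x = (s a, (s a, a :: w)) /\ in_basis s t Z (s a, a :: w) /\ t (last a w) = s a.
Proof.
case: x => e [v [|a w]]; rewrite mem_dom0 /=; first by rewrite andbF.
move=> /and3P [Hb /eqP Hv /eqP He].
have Ha := in_basis_src Hb.
exists a, w; rewrite Ha -Hv; split=> //; split=> //.
by rewrite -(ptgt_cons v) He Hv.
Qed.

Lemma dom0_word x y : x \in dom0 s t Z N -> y \in dom0 s t Z N -> x.2.2 = y.2.2 -> x = y.
Proof.
move=> /dom0E [a [w [-> _]]] /dom0E [b [u [-> _]]] /= [-> ->] //.
Qed.

Lemma coef_dc (k : fieldType) x y : x \in dom0 s t Z N -> y \in cod0 s t Z N ->
  delta0_coef s t Z k x y = ((y.2.2 == rcons x.2.2 y.1)%:R - (y.2.2 == y.1 :: x.2.2)%:R)%R.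
Proof.
move=> /dom0E [b [w [-> [Hbw Hl]]]].
case: y => a [u d]; rewrite mem_cod0 /= => /and3P [Hd /eqP Hu /eqP Ht]; subst u.
rewrite /delta0_coef /arrow_after /arrow_before /=.
congr (_%:R - _%:R)%R.
  rewrite xpair_eqE -rcons_cons.
  case E1: (d == rcons (b :: w) a); last by rewrite /= !andbF.
  move/eqP: E1 => E1; subst d.
  move: (Hd) => /in_basis_rcons [Hbw' Hl'].
  have Hab : s a = s b by rewrite -Hl' Hl.
  by rewrite Hab eqxx /= -Hab Hd.
rewrite xpair_eqE eqxx /=.
case E1: (d == a :: b :: w); last by rewrite !andbF.
move/eqP: E1 => E1; subst d.
move: (Hd) => /in_basis_behead [_ Hab].
by rewrite Hab !eqxx Hd.
Qed.

End Gen2.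

Local Open Scope ring_scope.

Notation tn D i := (tnth (in_tuple D) i).

Lemma eq_tn (T : eqType) (D : seq T) (i j : 'I_(size D)) :
  uniq D -> (tn D i == tn D j) = (i == j).
Proof. by move=> U; apply/eqP/eqP => [|-> //]; apply/tuple_uniqP. Qed.

Lemma tn_mem (T : eqType) (D : seq T) i : tn D i \in D.
Proof. by rewrite (mem_tnth i (in_tuple D)). Qed.

Lemma tn_ex (T : eqType) (D : seq T) x : x \in D -> exists i, tn D i = x.
Proof.
move=> Hx; have Hi : (index x D < size D)%N by rewrite index_mem.
by exists (Ordinal Hi); rewrite (tnth_nth x) /= nth_index.
Qed.

Lemma sum_pick (k : fieldType) n (F : 'I_n -> k) j0 :
  \sum_(j < n) (j == j0)%:R * F j = F j0.
Proof.
rewrite (bigD1 j0) //= eqxx mul1r big1 ?addr0 // => j /negbTE ->.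
by rewrite mul0r.
Qed.

Lemma sum_pick' (k : fieldType) n (F : 'I_n -> k) j0 :
  \sum_(j < n) F j * (j == j0)%:R = F j0.
Proof. by rewrite -(sum_pick F j0); apply: eq_bigr => j _; rewrite mulrC. Qed.

Section Abstract.
Variables (k : fieldType) (TA TB TC TD TN : eqType).
Variables (dA : seq TA) (dB : seq TB) (cA : seq TC) (cB : seq TD) (ns : seq TN).
Variables (psi : TA -> TB) (psi' : TC -> TD) (nsv : TN -> TB).
Variables (coefA : TA -> TC -> k) (coefB : TB -> TD -> k).
Hypotheses (UdA : uniq dA) (UdB : uniq dB) (UcA : uniq cA) (UcB : uniq cB) (Uns : uniq ns).
Hypothesis H1 : forall x, x \in dA -> psi x \in dB.
Hypothesis H2 : forall p, p \in ns -> nsv p \in dB.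
Hypothesis H3 : {in dA &, injective psi}.
Hypothesis H4 : {in ns &, injective nsv}.
Hypothesis H5 : forall x p, x \in dA -> p \in ns -> psi x != nsv p.
Hypothesis H6 : forall c, c \in cA -> psi' c \in cB.
Hypothesis C1 : forall x c, x \in dA -> c \in cA -> coefB (psi x) (psi' c) = coefA x c.
Hypothesis C2 : forall x c', x \in dA -> c' \in cB -> coefB (psi x) c' != 0 ->
  exists2 c, c \in cA & c' = psi' c.
Hypothesis C3 : forall x' c, x' \in dB -> c \in cA -> coefB x' (psi' c) != 0 ->
  exists2 x, x \in dA & x' = psi x.
Hypothesis C4 : forall p c', p \in ns -> c' \in cB -> coefB (nsv p) c' = 0.
Hypothesis HD : forall x', x' \in dB ->
  [\/ exists2 x, x \in dA & x' = psi x,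
      exists2 p, p \in ns & x' = nsv p |
      exists2 c', c' \in cB & exists2 sg : k, sg != 0 &
        forall x'', x'' \in dB -> coefB x'' c' = sg * (x'' == x')%:R].

Let dltA : 'M[k]_(size dA, size cA) := \matrix_(i, j) coefA (tn dA i) (tn cA j).
Let dltB : 'M[k]_(size dB, size cB) := \matrix_(i, j) coefB (tn dB i) (tn cB j).
Let P : 'M[k]_(size dA, size dB) := \matrix_(i, j) (tn dB j == psi (tn dA i))%:R.
Let Zm : 'M[k]_(size ns, size dB) := \matrix_(i, j) (tn dB j == nsv (tn ns i))%:R.

Lemma jpsi i : exists j, tn dB j = psi (tn dA i).
Proof. exact/tn_ex/H1/tn_mem. Qed.

Lemma jnsv i : exists j, tn dB j = nsv (tn ns i).
Proof. exact/tn_ex/H2/tn_mem. Qed.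

Lemma PPt : P *m P^T = 1%:M.
Proof.
apply/matrixP => i i'; rewrite !mxE.
have [j Hj] := jpsi i; have [j' Hj'] := jpsi i'.
under eq_bigr => l _ do rewrite !mxE -Hj -Hj' !eq_tn //.
rewrite sum_pick -(eq_tn j j' UdB) Hj Hj'; congr ((nat_of_bool _)%:R).
apply/idP/idP => [/eqP Heq|/eqP ->//].
by move: (H3 (tn_mem i) (tn_mem i') Heq) => /eqP; rewrite eq_tn // => /eqP.
Qed.

Lemma ZZt : Zm *m Zm^T = 1%:M.
Proof.
apply/matrixP => i i'; rewrite !mxE.
have [j Hj] := jnsv i; have [j' Hj'] := jnsv i'.
under eq_bigr => l _ do rewrite !mxE -Hj -Hj' !eq_tn //.
rewrite sum_pick -(eq_tn j j' UdB) Hj Hj'; congr ((nat_of_bool _)%:R).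
apply/idP/idP => [/eqP Heq|/eqP ->//].
by move: (H4 (tn_mem i) (tn_mem i') Heq) => /eqP; rewrite eq_tn // => /eqP.
Qed.

Lemma PZt : P *m Zm^T = 0.
Proof.
apply/matrixP => i i'; rewrite !mxE.
have [j Hj] := jpsi i; have [j' Hj'] := jnsv i'.
under eq_bigr => l _ do rewrite !mxE -Hj -Hj' !eq_tn //.
rewrite sum_pick -(eq_tn j j' UdB) Hj Hj'.
by move: (H5 (tn_mem i) (tn_mem i')) => /negbTE ->.
Qed.

Lemma psi_eq i i' : (psi (tn dA i) == psi (tn dA i')) = (i == i').
Proof.
apply/idP/idP => [/eqP Heq|/eqP ->//].
by move: (H3 (tn_mem i) (tn_mem i') Heq) => /eqP; rewrite eq_tn.
Qed.

Lemma nsv_eq i i' : (nsv (tn ns i) == nsv (tn ns i')) = (i == i').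
Proof.
apply/idP/idP => [/eqP Heq|/eqP ->//].
by move: (H4 (tn_mem i) (tn_mem i') Heq) => /eqP; rewrite eq_tn.
Qed.

Lemma rowfree_P : row_free P.
Proof. by apply/row_freeP; exists P^T; exact: PPt. Qed.

Lemma rowfree_Z : row_free Zm.
Proof. by apply/row_freeP; exists Zm^T; exact: ZZt. Qed.

Lemma sum_at (T : eqType) (D : seq T) (x : T) (G : T -> k) :
  uniq D -> x \in D -> \sum_(j < size D) (tn D j == x)%:R * G (tn D j) = G x.
Proof.
move=> UD /tn_ex [j0 <-].
under eq_bigr => j _ do rewrite eq_tn //.
by rewrite sum_pick.
Qed.

Lemma F2 r (X : 'M[k]_(r, size dA)) : X *m dltA = 0 -> X *m P *m dltB = 0.
Proof.
move=> HX; apply/matrixP => q c'; rewrite [RHS]mxE mxE.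
under eq_bigr => j _ do rewrite /dltB /P !mxE big_distrl /=.
under eq_bigr => j _ do under eq_bigr => i _ do rewrite mxE.
rewrite exchange_big /=.
under eq_bigr => i _.
  under eq_bigr => j _ do rewrite -mulrA.
  rewrite -big_distrr /= (sum_at (fun y => coefB y (tn cB c')) UdB (H1 (tn_mem i))).
  over.
case: (boolP (has (fun c => psi' c == tn cB c') cA)) => [/hasP [c Hc /eqP Hcc]|Hn].
  have [cc Hcc'] := tn_ex Hc.
  transitivity ((X *m dltA) q cc); last by rewrite HX mxE.
  rewrite mxE; apply: eq_bigr => i _; rewrite /dltA mxE -Hcc C1 ?tn_mem // Hcc'.
  by [].
apply: big1 => i _.
case: (coefB (psi (tn dA i)) (tn cB c') =P 0) => [->|/eqP Hne]; first by rewrite mulr0.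
have [c Hc Hcc] := C2 (tn_mem i) (tn_mem c') Hne.
by move/hasPn: Hn => /(_ c Hc); rewrite -Hcc eqxx.
Qed.

Lemma F1 : Zm *m dltB = 0.
Proof.
apply/matrixP => q c'; rewrite !mxE.
under eq_bigr => j _ do rewrite /Zm /dltB !mxE.
rewrite (sum_at (fun y => coefB y (tn cB c')) UdB (H2 (tn_mem q))).
exact: C4 (tn_mem q) (tn_mem c').
Qed.

Section F3.
Variables (r : nat) (Y : 'M[k]_(r, size dB)).
Hypothesis HY : Y *m dltB = 0.

Let yv q (y : TB) := \sum_(j < size dB) Y q j * (tn dB j == y)%:R.

Lemma yvE q j : Y q j = yv q (tn dB j).
Proof.
rewrite /yv; under eq_bigr => j' _ do rewrite eq_tn //.
by rewrite sum_pick'.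
Qed.

Lemma YPt q i : (Y *m P^T) q i = yv q (psi (tn dA i)).
Proof. by rewrite mxE; apply: eq_bigr => j _; rewrite !mxE. Qed.

Lemma YZt q i : (Y *m Zm^T) q i = yv q (nsv (tn ns i)).
Proof. by rewrite mxE; apply: eq_bigr => j _; rewrite !mxE. Qed.

Lemma F3a : Y = Y *m P^T *m P + Y *m Zm^T *m Zm.
Proof.
apply/matrixP => q j; rewrite !mxE.
under eq_bigr => i _ do rewrite YPt /P mxE.
under [X in _ + X]eq_bigr => i _ do rewrite YZt /Zm mxE.
case: (boolP (has (fun x => psi x == tn dB j) dA)) => [/hasP [x Hx /eqP Hxj]|Hn1].
  have [i1 Hi1] := tn_ex Hx.
  rewrite -Hxj -Hi1.
  under eq_bigr => i _ do rewrite psi_eq eq_sym.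
  rewrite sum_pick' big1 ?addr0; first by rewrite yvE -Hxj -Hi1.
  move=> l _; rewrite (negbTE (H5 (tn_mem i1) (tn_mem l))) mulr0 //.
case: (boolP (has (fun p => nsv p == tn dB j) ns)) => [/hasP [p Hp /eqP Hpj]|Hn2].
  have [l1 Hl1] := tn_ex Hp.
  rewrite -Hpj -Hl1.
  under [X in _ + X]eq_bigr => l _ do rewrite nsv_eq eq_sym.
  rewrite sum_pick' big1 ?add0r; first by rewrite yvE -Hpj -Hl1.
  move=> i _; rewrite eq_sym (negbTE (H5 (tn_mem i) (tn_mem l1))) mulr0 //.
rewrite !big1 ?addr0.
- have [[x Hx Hxe]|[p Hp Hpe]|[c' Hc' [sg Hsg Hco]]] := HD (tn_mem j).
  + by move/hasPn: Hn1 => /(_ x Hx); rewrite -Hxe eqxx.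
  + by move/hasPn: Hn2 => /(_ p Hp); rewrite -Hpe eqxx.
  have [cc Hcc] := tn_ex Hc'.
  have : (Y *m dltB) q cc = 0 by rewrite HY mxE.
  rewrite mxE.
  under eq_bigr => j' _ do rewrite /dltB mxE Hcc Hco ?tn_mem // eq_tn // mulrCA.
  rewrite -big_distrr /= sum_pick' => /eqP; rewrite mulf_eq0 (negbTE Hsg) /= => /eqP //.
- move=> l _; case: (boolP (tn dB j == nsv (tn ns l))) => [/eqP He|]; last by rewrite mulr0.
  by move/hasPn: Hn2 => /(_ _ (tn_mem l)); rewrite He eqxx.
- move=> i _; case: (boolP (tn dB j == psi (tn dA i))) => [/eqP He|]; last by rewrite mulr0.
  by move/hasPn: Hn1 => /(_ _ (tn_mem i)); rewrite He eqxx.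
Qed.

Lemma F3b : Y *m P^T *m dltA = 0.
Proof.
apply/matrixP => q cc; rewrite !mxE.
under eq_bigr => i _ do rewrite YPt /yv big_distrl /=.
rewrite exchange_big /=.
have inner : forall j, \sum_(i < size dA) Y q j * (tn dB j == psi (tn dA i))%:R * dltA i cc
   = Y q j * coefB (tn dB j) (psi' (tn cA cc)).
  move=> j.
  under eq_bigr => i _ do rewrite -mulrA.
  rewrite -big_distrr /=; congr (_ * _).
  case: (boolP (has (fun x => psi x == tn dB j) dA)) => [/hasP [x Hx /eqP Hxj]|Hn1].
    have [i1 Hi1] := tn_ex Hx.
    rewrite -Hxj -Hi1.
    under eq_bigr => i _ do rewrite eq_sym psi_eq.
    by rewrite sum_pick /dltA mxE C1 ?tn_mem.
  rewrite big1.
    case: (coefB (tn dB j) (psi' (tn cA cc)) =P 0) => [->//|/eqP Hne].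
    have [x Hx Hxe] := C3 (tn_mem j) (tn_mem cc) Hne.
    by move/hasPn: Hn1 => /(_ x Hx); rewrite -Hxe eqxx.
  move=> i _; case: (boolP (tn dB j == psi (tn dA i))) => [/eqP He|]; last by rewrite mul0r.
  by move/hasPn: Hn1 => /(_ _ (tn_mem i)); rewrite He eqxx.
under eq_bigr => j _ do rewrite inner.
have [c0 Hc0] := tn_ex (H6 (tn_mem cc)).
transitivity ((Y *m dltB) q c0); last by rewrite HY mxE.
by rewrite mxE; apply: eq_bigr => j _; rewrite /dltB mxE Hc0.
Qed.

End F3.

Theorem abstract_main :
  (kermx dltB :=: kermx dltA *m P + Zm)%MS /\ mxdirect (kermx dltA *m P + Zm) /\
  \rank (kermx dltB) = (\rank (kermx dltA) + size ns)%N.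
Proof.
set KA := kermx dltA; set KB := kermx dltB.
have Hcap : (KA *m P :&: Zm)%MS = 0.
  set C := (KA *m P :&: Zm)%MS.
  have /submxP [U HU] : (C <= KA *m P)%MS by exact: capmxSl.
  have /submxP [W HW] : (C <= Zm)%MS by exact: capmxSr.
  have : C *m Zm^T = W by rewrite HW -mulmxA ZZt mulmx1.
  rewrite {1}HU -!mulmxA PZt !mulmx0 => HW0.
  by rewrite HW -HW0 mul0mx.
have Heq : (KB :=: KA *m P + Zm)%MS.
  apply/eqmxP/andP; split.
    have HY : KB *m dltB = 0 by exact: mulmx_ker.
    rewrite (F3a HY).
    have /submxP [U HU] : (KB *m P^T <= KA)%MS by rewrite sub_kermx F3b.
    rewrite HU; apply: addmx_sub_adds; first by rewrite -mulmxA submxMl.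
    exact: submxMl.
  rewrite addsmx_sub; apply/andP; split; rewrite sub_kermx.
    by rewrite F2 // mulmx_ker.
  by rewrite F1.
split=> //; split; first exact/mxdirect_addsP.
rewrite (eqmx_rank (introT eqmxP Heq)) mxrank_disjoint_sum //.
rewrite mxrankMfree ?rowfree_P //; congr (_ + _)%N.
by move: rowfree_Z; rewrite /row_free => /eqP.
Qed.

End Abstract.

Section Glue.
Variables (V E : finType) (s t : E -> V) (v1 vn : V) (hneq : v1 != vn).
Variable Z : seq (seq E).

Notation g := (glue hneq).
Notation sB' := (sB s hneq).
Notation tB' := (tB t hneq).
Notation ZB' := (ZB s t v1 vn Z).

Lemma val_glue x : val (g x) = if x == vn then v1 else x.
Proof. by rewrite /glue val_insubd; case: (x =P vn). Qed.

Lemma glue_12 u u' : u \in [:: v1; vn] -> u' \in [:: v1; vn] -> g u = g u'.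
Proof.
move=> Hu Hu'; apply: val_inj; rewrite !val_glue.
move: Hu Hu'; rewrite !inE => /orP [] /eqP -> /orP [] /eqP ->; rewrite ?eqxx //.
all: by case: (v1 == vn).
Qed.

Lemma glue_eq u u' : g u = g u' -> u = u' \/ (u \in [:: v1; vn]) && (u' \in [:: v1; vn]).
Proof.
move/(congr1 val); rewrite !val_glue !inE.
case: (u =P vn) => [->|Hu]; case: (u' =P vn) => [->|Hu'] //=; rewrite ?eqxx ?orbT.
- by right.
- by move=> <-; right; rewrite eqxx.
- by move=> ->; right; rewrite eqxx.
- by left.
Qed.

Definition mm (c d : E) := [&& t c \in [:: v1; vn], s d \in [:: v1; vn] & t c != s d].

Lemma noinf_ZB w : all (fun r => ~~ infix r w) ZB' =
  all (fun r => ~~ infix r w) Z && [forall c, forall d, mm c d ==> ~~ infix [:: c; d] w].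
Proof.
rewrite /ZB all_cat; congr andb.
apply/allP/forallP => [H c|H r /mapP [[c d] /=]].
  apply/forallP => d; apply/implyP => Hm; apply: (H [:: c; d]).
  apply/mapP; exists (c, d) => //; rewrite mem_filter /=.
  by rewrite [X in X && _]Hm; apply/allpairsP; exists (c, d); rewrite !mem_enum.
rewrite mem_filter /= => /andP [Hm _] ->.
by move: (H c) => /forallP /(_ d) /implyP; apply.
Qed.

Lemma pathAB a w : path (fun x y => t x == s y) a w -> path (fun x y => tB' x == sB' y) a w.
Proof. by apply: sub_path => x y /eqP; rewrite /tB /sB => ->. Qed.

Lemma pathA_infix a w c d : path (fun x y => t x == s y) a w ->
  infix [:: c; d] (a :: w) -> t c = s d.
Proof.
elim: w a => [|b w IH] a //=.
  by rewrite andbF.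
move=> /andP [/eqP Hab Hp] /orP [/and3P [/eqP -> /eqP -> _] // | H].
by apply: (IH b Hp); rewrite infix_consl /=.
Qed.

Lemma pathB_A a w : path (fun x y => tB' x == sB' y) a w ->
  (forall c d, mm c d -> ~~ infix [:: c; d] (a :: w)) ->
  path (fun x y => t x == s y) a w.
Proof.
elim: w a => [|b w IH] a; first by [].
move=> HpB Hm; have /andP [/eqP Hab Hp] := HpB; apply/andP; split.
  case: (glue_eq Hab) => [->//|/andP [H1 H2]].
  apply/negPn/negP => Hne.
  have : mm a b by rewrite /mm H1 H2.
  have Hi : infix [:: a; b] (a :: b :: w) by apply/infixP; exists [::], w.
  by move/Hm; rewrite Hi.
apply: (IH b Hp) => c d /Hm; apply: contra => Hi.
by apply: (infix_trans Hi); rewrite infix_cons.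
Qed.

Lemma in_basisB a w x :
  in_basis sB' tB' ZB' (x, a :: w) = (sB' a == x) && in_basis s t Z (s a, a :: w).
Proof.
rewrite !in_basis_cons noinf_ZB eqxx /=.
case: (sB' a == x) => //=.
case HA: (path (fun x y => t x == s y) a w).
  rewrite (pathAB HA) /=.
  case: (all _ Z) => //=.
  apply/forallP => c; apply/forallP => d; apply/implyP => /and3P [_ _ Hne].
  by apply/negP => /(pathA_infix HA) /eqP; rewrite (negbTE Hne).
case HB: (path (fun x y => tB' x == sB' y) a w) => //=.
case: (all _ Z) => //=.
apply/negP => /forallP H.
suff : path (fun x y => t x == s y) a w by rewrite HA.
apply: pathB_A HB _ => c d Hm.
by move: (H c) => /forallP /(_ d) /implyP; apply.
Qed.

Lemma in_basisB_nil x v :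
  in_basis sB' tB' ZB' (x, [::]) = in_basis s t Z (v, [::]).
Proof.
rewrite /in_basis noinf_ZB /=.
case: (all _ Z) => //=.
by apply/forallP => c; apply/forallP => d; apply/implyP.
Qed.

Lemma ptgt_glue u d : ptgt tB' (g u, d) = g (ptgt t (u, d)).
Proof. by rewrite /ptgt /= -(last_map g) -map_comp. Qed.

Variable N : nat.
Hypothesis adm : forall p : qpath V E, is_path s t p -> plen p = N -> ~~ in_basis s t Z p.

Lemma admB (p : qpath (VB vn) E) : is_path sB' tB' p -> plen p = N -> ~~ in_basis sB' tB' ZB' p.
Proof.
case: p => x [|a w] Hp Hl.
  by rewrite (in_basisB_nil x v1); apply: adm.
rewrite in_basisB; apply/negP => /andP [_ Hb].
have Hp2 : is_path s t (s a, a :: w) by move: Hb => /andP [].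
by move: (@adm _ Hp2 Hl); rewrite Hb.
Qed.

Notation dA := (dom0 s t Z N).
Notation dB := (dom0 sB' tB' ZB' N).
Notation cA := (cod0 s t Z N).
Notation cB := (cod0 sB' tB' ZB' N).
Notation ns := (nsp_list s t v1 vn Z N).
Definition psi' (y : E * qpath V E) : E * qpath (VB vn) E := (y.1, (g y.2.1, y.2.2)).
Definition nsv (p : qpath V E) : VB vn * qpath (VB vn) E := (g v1, (g p.1, p.2)).
Notation psi := (psi_pair hneq).

Lemma sBE a : sB' a = g (s a). Proof. by []. Qed.
Lemma tBE a : tB' a = g (t a). Proof. by []. Qed.

Lemma ptgtB_cons x a w : ptgt tB' (x, a :: w) = g (t (last a w)).
Proof. by rewrite ptgt_cons. Qed.

Lemma H1 x : x \in dA -> psi x \in dB.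
Proof.
move=> /(dom0E adm) [a [w [-> [Hb Hl]]]].
rewrite (mem_dom0 admB) /= in_basisB sBE eqxx Hb /= ptgtB_cons Hl !eqxx.
by [].
Qed.

Lemma nsE p : p \in ns -> exists a w, p = (s a, a :: w) /\
  in_basis s t Z (s a, a :: w) /\ nonspecial s t v1 vn Z (s a, a :: w) /\
  s a \in [:: v1; vn] /\ t (last a w) \in [:: v1; vn] /\ s a != t (last a w).
Proof.
rewrite mem_filter => /andP [Hn _]; move: (Hn) => /and4P [Hb He _ _].
case: p Hn Hb He => v [|a w] Hn Hb He.
  by move: He; rewrite /psrc /ptgt /=; case/orP => /andP [/eqP -> /eqP H]; move: hneq; rewrite H eqxx.
have Hv := in_basis_src Hb; subst v.
exists a, w; split=> //; split=> //; split=> //.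
move: He; rewrite /psrc ptgt_cons /= !inE.
case/orP => /andP [/eqP -> /eqP ->]; rewrite !eqxx ?orbT //=; split=> //; split=> //.
all: by rewrite ?hneq // eq_sym hneq.
Qed.

Lemma H2 p : p \in ns -> nsv p \in dB.
Proof.
move=> /nsE [a [w [-> [Hb [_ [Hs [Ht _]]]]]]].
rewrite (mem_dom0 admB) /= in_basisB sBE eqxx Hb /= ptgtB_cons.
by rewrite (glue_12 Hs (mem_head _ _)) (glue_12 Ht (mem_head _ _)) eqxx.
Qed.

Lemma H3 : {in dA &, injective psi}.
Proof.
move=> x y Hx Hy Hxy; apply: (dom0_word adm Hx Hy).
by move: Hxy; case: x {Hx} => e [v w]; case: y {Hy} => e' [v' w'] [].
Qed.

Lemma H4 : {in ns &, injective nsv}.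
Proof.
move=> p q /nsE [a [w [-> _]]] /nsE [b [u [-> _]]] /(congr1 (fun x => x.2.2)) /= [-> ->].
by [].
Qed.

Lemma H5 x p : x \in dA -> p \in ns -> psi x != nsv p.
Proof.
move=> /(dom0E adm) [a [w [-> [Hb Hl]]]] /nsE [b [u [-> [_ [_ [_ [_ Hne]]]]]]].
apply/negP => /eqP /(congr1 (fun x => x.2.2)) /= [E1 E2]; subst b u.
by move: Hne; rewrite Hl eqxx.
Qed.

Lemma cod0E_A c : c \in cA -> exists b d, c = (b, (s b, d)) /\
  in_basis s t Z (s b, d) /\ ptgt t (s b, d) = t b.
Proof.
case: c => b [u d]; rewrite (mem_cod0 adm) /= => /and3P [Hb /eqP Hu /eqP Ht].
by subst u; exists b, d.
Qed.

Lemma cod0E_B c : c \in cB -> exists b d, c = (b, (sB' b, d)) /\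
  in_basis sB' tB' ZB' (sB' b, d) /\ ptgt tB' (sB' b, d) = tB' b.
Proof.
case: c => b [u d]; rewrite (mem_cod0 admB) /= => /and3P [Hb /eqP Hu /eqP Ht].
by subst u; exists b, d.
Qed.

Lemma H6 c : c \in cA -> psi' c \in cB.
Proof.
move=> /cod0E_A [b [d [-> [Hb Ht]]]].
rewrite (mem_cod0 admB) /psi' /= sBE eqxx ptgt_glue Ht tBE eqxx !andbT.
case: d Hb {Ht} => [|a d] Hb; first by rewrite (in_basisB_nil _ (s b)).
by rewrite in_basisB sBE (in_basis_src Hb) eqxx Hb.
Qed.

Lemma C1 (k : fieldType) x c : x \in dA -> c \in cA ->
  delta0_coef sB' tB' ZB' k (psi x) (psi' c) = delta0_coef s t Z k x c.
Proof.
move=> Hx Hc; rewrite (coef_dc admB k (H1 Hx) (H6 Hc)) (coef_dc adm k Hx Hc).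
by case: x {Hx} => e [v w]; case: c {Hc} => b [u d].
Qed.

Lemma C2 (k : fieldType) x c' : x \in dA -> c' \in cB ->
  delta0_coef sB' tB' ZB' k (psi x) c' != 0%R -> exists2 c, c \in cA & c' = psi' c.
Proof.
move=> Hx Hc'; rewrite (coef_dc admB k (H1 Hx) Hc').
move: (Hx) => /(dom0E adm) [a [w [Ex [Hb Hl]]]]; rewrite Ex.
move: Hc' => /cod0E_B [b [d [-> [HdB HtB]]]] /=.
case: (boolP (d == rcons (a :: w) b)) => [/eqP Ed|_].
  move=> _; subst d.
  move: HdB; rewrite rcons_cons in_basisB => /andP [_ HdA].
  rewrite -rcons_cons in HdA.
  have [_ Hl'] := in_basis_rcons HdA.
  have Hab : s b = s a by rewrite -Hl' Hl.
  exists (b, (s b, rcons (a :: w) b)); last by rewrite /psi' /= sBE.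
  by rewrite (mem_cod0 adm) /= Hab HdA eqxx -rcons_cons ptgt_rcons eqxx.
case: (boolP (d == b :: a :: w)) => [/eqP Ed|_]; last by rewrite subrr eqxx.
move=> _; subst d.
move: HdB; rewrite in_basisB => /andP [_ HdA].
have [_ Hba] := in_basis_behead HdA.
exists (b, (s b, b :: a :: w)); last by rewrite /psi' /= sBE.
by rewrite (mem_cod0 adm) /= HdA eqxx ptgt_cons /= Hl Hba eqxx.
Qed.

Lemma C3 (k : fieldType) x' c : x' \in dB -> c \in cA ->
  delta0_coef sB' tB' ZB' k x' (psi' c) != 0%R -> exists2 x, x \in dA & x' = psi x.
Proof.
move=> Hx' Hc; rewrite (coef_dc admB k Hx' (H6 Hc)).
move: (Hx') => /(dom0E admB) [a [w [Ex [HbB _]]]]; rewrite Ex.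
move: HbB; rewrite in_basisB => /andP [_ Hb].
move: Hc => /cod0E_A [b [d [-> [Hd Ht]]]] /= Hnz.
suff Hl : t (last a w) = s a.
  exists (s a, (s a, a :: w)); last by rewrite /psi_pair /= sBE.
  by rewrite (mem_dom0 adm) /= Hb eqxx ptgt_cons Hl eqxx.
case: (boolP (d == rcons (a :: w) b)) => [/eqP Ed|Hd1].
  subst d; have [Hb' Hl'] := in_basis_rcons Hd.
  by rewrite Hl' (in_basis_src Hb').
case: (boolP (d == b :: a :: w)) => [/eqP Ed|Hd2].
  subst d; have [_ Hba] := in_basis_behead Hd.
  by move: Ht; rewrite ptgt_cons /= Hba.
by move: Hnz; rewrite (negbTE Hd1) (negbTE Hd2) subrr eqxx.
Qed.

Lemma C4 (k : fieldType) p c' : p \in ns -> c' \in cB ->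
  delta0_coef sB' tB' ZB' k (nsv p) c' = 0%R.
Proof.
move=> Hp Hc'; rewrite (coef_dc admB k (H2 Hp) Hc').
move: Hp => /nsE [a [w [-> [Hb [Hn _]]]]].
move: Hn => /and4P [_ _ /forallP F3 /forallP F4].
move: Hc' => /cod0E_B [b [d [-> [HdB HtB]]]] /=.
case: (boolP (d == rcons (a :: w) b)) => [/eqP Ed|_].
  subst d; move: HdB; rewrite rcons_cons in_basisB => /andP [_ HdA].
  rewrite -rcons_cons in HdA.
  have [_ Hl'] := in_basis_rcons HdA.
  move: (F3 b); rewrite ptgt_cons Hl' eqxx /= /arrow_after /=.
  by rewrite -rcons_cons HdA.
case: (boolP (d == b :: a :: w)) => [/eqP Ed|_]; last by rewrite subrr.
subst d; move: HdB; rewrite in_basisB => /andP [_ HdA].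
have [_ Hba] := in_basis_behead HdA.
by move: (F4 b); rewrite /psrc /= Hba eqxx /= /arrow_before /= HdA.
Qed.

Lemma HD (k : fieldType) x' : x' \in dB ->
  [\/ exists2 x, x \in dA & x' = psi x,
      exists2 p, p \in ns & x' = nsv p |
      exists2 c', c' \in cB & exists2 sg : k, sg != 0%R &
        forall x'', x'' \in dB -> delta0_coef sB' tB' ZB' k x'' c' = (sg * (x'' == x')%:R)%R].
Proof.
move=> Hx'; move: (Hx') => /(dom0E admB) [a [w [Ex [HbB HlB]]]].
move: (HbB); rewrite in_basisB => /andP [_ Hb].
case: (t (last a w) =P s a) => [Hl|Hne].
  apply: Or31; exists (s a, (s a, a :: w)); last by rewrite Ex /psi_pair /= sBE.
  by rewrite (mem_dom0 adm) /= Hb eqxx ptgt_cons Hl eqxx.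
have [//|/andP [Ht1 Hs1]] := glue_eq HlB.
have Hend : ((psrc (s a, a :: w) == v1) && (ptgt t (s a, a :: w) == vn))
    || ((psrc (s a, a :: w) == vn) && (ptgt t (s a, a :: w) == v1)).
  rewrite /psrc ptgt_cons /=.
  move: Ht1 Hs1 Hne; rewrite !inE => /orP [] /eqP -> /orP [] /eqP ->; rewrite ?eqxx //=.
  all: try by rewrite orbT.
have Hwordx : forall x'', x'' \in dB -> (a :: w == x''.2.2) = (x'' == x').
  move=> x'' Hx''; apply/idP/idP => [/eqP E1|/eqP ->]; last by rewrite Ex.
  by apply/eqP; apply: (dom0_word admB Hx'' Hx'); rewrite -E1 Ex.
case Hns: (nonspecial s t v1 vn Z (s a, a :: w)).
  apply: Or32; exists (s a, a :: w).
    by rewrite mem_filter Hns (mem_basis' adm).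
  by rewrite Ex /nsv /= sBE (glue_12 Hs1 (mem_head _ _)).
apply: Or33.
move: Hns; rewrite /nonspecial Hb Hend /=.
case: (boolP [forall a0, _]) => [_|/forallPn [b]].
  move/negbT/forallPn => [b]; rewrite negb_imply negbK /psrc /= => /andP [/eqP Htb HbA].
  have [_ Hba] := in_basis_behead HbA.
  have Hc' : (b, (sB' b, b :: a :: w)) \in cB.
    rewrite (mem_cod0 admB) /= in_basisB (eqxx (sB' b)) HbA /= ptgt_cons /= HlB sBE tBE Htb.
    by rewrite (eqxx (g (s a))).
  exists (b, (sB' b, b :: a :: w)) => //.
  exists (-1)%R; first by rewrite oppr_eq0 oner_eq0.
  move=> x'' Hx''; rewrite (coef_dc admB k Hx'' Hc').
  rewrite /= eqseq_cons eqxx /= Hwordx //.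
  case: (boolP (b :: a :: w == rcons x''.2.2 b)) => [/eqP E1|_]; last by rewrite sub0r mulN1r.
  have := congr1 (last b) E1; rewrite last_rcons /= => E2.
  by move: Hne; rewrite E2 Htb.
rewrite negb_imply negbK ptgt_cons => /andP [/eqP Hsb HbA].
have Hc' : (b, (sB' a, rcons (a :: w) b)) \in cB.
  have HbA' : in_basis s t Z (s a, a :: rcons w b) := HbA.
  rewrite (mem_cod0 admB) /= in_basisB (eqxx (sB' a)) HbA' /=.
  rewrite -rcons_cons ptgt_rcons (eqxx (tB' b)) andbT !sBE Hsb (glue_12 Hs1 Ht1).
  by rewrite (eqxx (g (t (last a w)))).
exists (b, (sB' a, rcons (a :: w) b)) => //.
exists 1%R; first by rewrite oner_eq0.
move=> x'' Hx''; rewrite (coef_dc admB k Hx'' Hc') /= -rcons_cons eqseq_rcons (eqxx b) andbT Hwordx // rcons_cons.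
case: (boolP (a :: rcons w b == b :: x''.2.2)) => [|_]; last by rewrite subr0 mul1r.
rewrite eqseq_cons => /andP [/eqP Eab _].
by move: Hne; rewrite -Hsb Eab => H; exfalso; apply: H.
Qed.

Lemma path_connect a w : path (fun x y => t x == s y) a w ->
  connect (fun x y => [exists a, ((s a == x) && (t a == y)) || ((s a == y) && (t a == x))])
    (s a) (t (last a w)).
Proof.
elim: w a => [|b w IH] a /=.
  by move=> _; apply: connect1; apply/existsP; exists a; rewrite !eqxx.
move=> /andP [/eqP Hab Hp]; apply: (connect_trans _ (IH b Hp)).
by apply: connect1; apply/existsP; exists a; rewrite Hab !eqxx.
Qed.

Lemma ns_block p : p \in ns -> same_block s t v1 vn.
Proof.
move=> /nsE [a [w [_ [Hb [/and4P [_ He _ _] _]]]]].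
have := path_connect (a := a) (w := w).
move: Hb; rewrite in_basis_cons => /and3P [_ Hp _] /(_ Hp).
move: He; rewrite /psrc ptgt_cons /= => /orP [] /andP [/eqP -> /eqP ->] //.
rewrite /same_block => H; rewrite (sym_connect_sym _) //.
by move=> x y; apply/existsP/existsP => [[c Hc]|[c Hc]]; exists c; rewrite orbC.
Qed.

End Glue.

Unset Implicit Arguments.

Theorem lemma6p2 (k : fieldType) (V E : finType) (s t : E -> V)
  (Z : seq (seq E)) (N : nat) (v1 vn : V) (hneq : v1 != vn) :
  (* Z is a minimal set of paths of length >= 2 *)
  (forall r, r \in Z -> is_relation s t r) ->
  (forall r r', r \in Z -> r' \in Z -> infix r r' -> r = r') ->
  (* admissibility: every path of length N lies in I_A *)
  (forall p : qpath V E, is_path s t p -> plen p = N -> ~~ in_basis s t Z p) ->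
  (* e_1 and e_n are not isolated *)
  (exists a, (s a == v1) || (t a == v1)) ->
  (exists a, (s a == vn) || (t a == vn)) ->
  let KA := kermx (delta0 s t Z k N) in
  let KB := kermx (delta0 (sB s hneq) (tB t hneq) (ZB s t v1 vn Z) k N) in
  let PA := (KA *m psi0 s t hneq Z k N)%R in
  let ZN := Znsp s t hneq Z k N in
  (KB :=: PA + ZN)%MS /\ mxdirect (PA + ZN) /\
  (same_block s t v1 vn -> \rank KB = (\rank KA + nsp s t v1 vn Z N)%N) /\
  (~~ same_block s t v1 vn -> \rank KB = \rank KA).
Proof.
move=> _ _ adm _ _ KA KB PA ZN.
have [Heq [Hdir Hrk]] := abstract_main (uniq_dom0 s t Z N)
  (uniq_dom0 (sB s hneq) (tB t hneq) (ZB s t v1 vn Z) N)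
  (filter_uniq _ (uniq_basis s t Z N))
  (H1 hneq adm) (H2 hneq adm) (@H3 _ _ _ _ _ _ hneq _ _ adm) (@H4 _ _ _ _ _ _ hneq Z N)
  (H5 hneq adm) (H6 hneq adm)
  (C1 hneq adm k) (@C2 _ _ _ _ _ _ hneq _ _ adm k) (@C3 _ _ _ _ _ _ hneq _ _ adm k)
  (@C4 _ _ _ _ _ _ hneq _ _ adm k) (@HD _ _ _ _ _ _ hneq _ _ adm k).
split; first exact: Heq.
split; first exact: Hdir.
split; first by move=> _; exact: Hrk.
move=> Hnb; rewrite [LHS]Hrk.
suff -> : size (nsp_list s t v1 vn Z N) = 0%N by rewrite addn0.
case E1: (nsp_list s t v1 vn Z N) => [|p q] //.
have Hp : p \in nsp_list s t v1 vn Z N by rewrite E1 mem_head.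
by move: Hnb; rewrite (ns_block hneq Hp).
Qed.
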